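(* Assume the symmetric setting $g_1=g_2=g>0$, $m_1=m_2=m>0$, $\alpha=\lambda=1$, $\eta^A=\eta=-\eta^a>0$, and assume $$g(\eta^2+1)<1\quad\text{or}\quad m<\frac{2g^2\eta^2}{g(\eta^2+1)-1}-g(\eta^2+1)+1 .$$ Then there exists a unique $\bar Y^*=(N_1^{a,*},N_2^{a,*},N_1^{A,*},N_2^{A,*},\delta^*,\delta^{A,*},\delta^{a,*})\in(0,\infty)^4\times\mathbb{R}^3$ with $G(\bar Y^*,0)=0$. Moreover $F(\bar Y^* )=0$, so that $(\bar Y^*,Z^*=0)$ is a stationary point of the limit system $G(\bar Y,Z)=0$, $\frac{dZ}{dt}=-2gZ+F(\bar Y)$; and it satisfies $N_1^{a,*}=N_2^{A,*}$, $N_2^{a,*}=N_1^{A,*}$ and $\delta^{A,*}=\delta^{a,*}$.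
   Context: Fast variable $\bar Y=(N_1^a,N_2^a,N_1^A,N_2^A,\delta,\delta^A,\delta^a)$, where $N_i^A,N_i^a$ are allelic subpopulation sizes in patch $i\in\{1,2\}$. Notation: $p_i=\frac{N_i^A}{N_i^A+N_i^a}$, $q_i=1-p_i$, $R^A=\frac{mN_2^A}{N_1^A}$, $S^A=\frac{mN_1^A}{N_2^A}$, $R^a=\frac{mN_2^a}{N_1^a}$, $S^a=\frac{mN_1^a}{N_2^a}$. With $\eta^A=\eta$, $\eta^a=-\eta$, the map $G$ has components: for $i\in\{1,2\}$, $j=3-i$, $\kappa\in\{A,a\}$, $G_{N_i^\kappa}=N_i^\kappa-(N_i^A+N_i^a)N_i^\kappa-g\big(Z+\eta^\kappa-(-1)^i\big)^2N_i^\kappa+m(N_j^\kappa-N_i^\kappa)$; $G_\delta=-\frac{\delta}{2}-2g\eta+\frac{\delta^A}{2}(R^A-S^A)-\frac{\delta^a}{2}(R^a-S^a)$; $G_{\delta^A}=2g+\frac{\delta}{2}(q_1-q_2)-\delta^A(R^A+S^A)+\frac{\delta^a-\delta^A}{4}(q_1+q_2)$; $G_{\delta^a}=2g+\frac{\delta}{2}(p_2-p_1)-\delta^a(R^a+S^a)+\frac{\delta^A-\delta^a}{4}(p_1+p_2)$. The map $F$ is $F(\bar Y)=\frac{\delta}{2}(p_1+p_2-1)+\frac{\delta^a}{2}(R^a-S^a)+\frac{\delta^A}{2}(R^A-S^A)+\frac{\delta^A-\delta^a}{4}(p_2-p_1)$. *)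

(* Defs.v *)
From HB Require Import structures.
From mathcomp Require Import all_boot all_order all_algebra.
From mathcomp Require Import reals.
Set Implicit Arguments. Unset Strict Implicit. Unset Printing Implicit Defensive.
Import Order.TTheory GRing.Theory Num.Theory.
Local Open Scope ring_scope.

Record fastvar (R : Type) := FastVar {
  Na1 : R; Na2 : R; NA1 : R; NA2 : R; dl : R; dlA : R; dla : R }.

Section Defs.
Variable R : realType.
(* parameters: g (selection), m (migration), eta (eta^A = eta, eta^a = -eta) *)
Variables (g m eta : R).

Definition p1 (Y : fastvar R) := NA1 Y / (NA1 Y + Na1 Y).
Definition p2 (Y : fastvar R) := NA2 Y / (NA2 Y + Na2 Y).
Definition q1 Y := 1 - p1 Y.
Definition q2 Y := 1 - p2 Y.
Definition RA (Y : fastvar R) := m * NA2 Y / NA1 Y.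
Definition SA (Y : fastvar R) := m * NA1 Y / NA2 Y.
Definition Ra (Y : fastvar R) := m * Na2 Y / Na1 Y.
Definition Sa (Y : fastvar R) := m * Na1 Y / Na2 Y.

(* G_{N_i^kappa} with i in {1,2}, j = 3 - i, (-1)^1 = -1, (-1)^2 = 1 *)
Definition G_Na1 (Y : fastvar R) (Z : R) :=
  Na1 Y - (NA1 Y + Na1 Y) * Na1 Y - g * (Z - eta + 1) ^+ 2 * Na1 Y
  + m * (Na2 Y - Na1 Y).
Definition G_Na2 (Y : fastvar R) (Z : R) :=
  Na2 Y - (NA2 Y + Na2 Y) * Na2 Y - g * (Z - eta - 1) ^+ 2 * Na2 Y
  + m * (Na1 Y - Na2 Y).
Definition G_NA1 (Y : fastvar R) (Z : R) :=
  NA1 Y - (NA1 Y + Na1 Y) * NA1 Y - g * (Z + eta + 1) ^+ 2 * NA1 Y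
  + m * (NA2 Y - NA1 Y).
Definition G_NA2 (Y : fastvar R) (Z : R) :=
  NA2 Y - (NA2 Y + Na2 Y) * NA2 Y - g * (Z + eta - 1) ^+ 2 * NA2 Y
  + m * (NA1 Y - NA2 Y).
Definition G_dl (Y : fastvar R) :=
  - dl Y / 2 - 2 * g * eta + dlA Y / 2 * (RA Y - SA Y) - dla Y / 2 * (Ra Y - Sa Y).
Definition G_dlA (Y : fastvar R) :=
  2 * g + dl Y / 2 * (q1 Y - q2 Y) - dlA Y * (RA Y + SA Y)
  + (dla Y - dlA Y) / 4 * (q1 Y + q2 Y).
Definition G_dla (Y : fastvar R) :=
  2 * g + dl Y / 2 * (p2 Y - p1 Y) - dla Y * (Ra Y + Sa Y)
  + (dlA Y - dla Y) / 4 * (p1 Y + p2 Y).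

Definition G_zero (Y : fastvar R) (Z : R) : Prop :=
  [/\ G_Na1 Y Z = 0, G_Na2 Y Z = 0, G_NA1 Y Z = 0 & G_NA2 Y Z = 0] /\
  [/\ G_dl Y = 0, G_dlA Y = 0 & G_dla Y = 0].

Definition F (Y : fastvar R) : R :=
  dl Y / 2 * (p1 Y + p2 Y - 1) + dla Y / 2 * (Ra Y - Sa Y)
  + dlA Y / 2 * (RA Y - SA Y) + (dlA Y - dla Y) / 4 * (p2 Y - p1 Y).

Definition admissible (Y : fastvar R) : Prop :=
  [/\ 0 < Na1 Y, 0 < Na2 Y, 0 < NA1 Y & 0 < NA2 Y].

Definition stationary (Y : fastvar R) (Z : R) : Prop :=
  G_zero Y Z /\ - 2 * g * Z + F Y = 0.
End Defs.

(* Main.v *)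
Require Import Defs.
From HB Require Import structures.
From mathcomp Require Import all_boot all_order all_algebra.
From mathcomp Require Import reals ring lra.
Import Order.TTheory GRing.Theory Num.Theory.
Local Open Scope ring_scope.

Section Main.
Variable R : realType.
Variables g m eta : R.
Hypotheses (hg : 0 < g) (hm : 0 < m) (he : 0 < eta).

Lemma lin (r s P x y z : R) : 0 < r -> 0 < s -> 0 < 1 - P -> 0 < 1 + P ->
  (-x/2 - 2*g*eta + y/2*(r-s) - z/2*(s-r) = 0 /\
   2*g + x/2*P - y*(r+s) + (z-y)/4*1 = 0 /\
   2*g + x/2*P - z*(r+s) + (y-z)/4*1 = 0) <->
  (y = 2*g*(1-eta*P)/((r+s) - (r-s)*P) /\ z = 2*g*(1-eta*P)/((r+s) - (r-s)*P)
   /\ x = -4*g*eta + 2*(2*g*(1-eta*P)/((r+s) - (r-s)*P))*(r-s)).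
Proof.
move=> hr hs hP1 hP2.
have hK : 0 < (r+s) - (r-s)*P.
  have -> : (r+s) - (r-s)*P = r*(1-P) + s*(1+P) by ring.
  by rewrite addr_gt0 // mulr_gt0.
have hK0 : (r+s) - (r-s)*P != 0 by rewrite gt_eqF.
set K := (r+s) - (r-s)*P in hK hK0 *.
split.
- case=> [e1 [e2 e3]].
  have hzy : z = y.
    have h : (z - y) * (r + s + 1/2) = 0.
      have -> : (z - y) * (r + s + 1/2) = 2*g + x/2*P - y*(r+s) + (z-y)/4*1
         - (2*g + x/2*P - z*(r+s) + (y-z)/4*1) by field.
      by rewrite e2 e3 subr0.
    move/eqP: h; rewrite mulf_eq0 => /orP [/eqP h|/eqP h]; first by apply/eqP; rewrite -subr_eq0 h.
    have : 0 < r + s + 1/2 by rewrite !addr_gt0 // divr_gt0.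
    by rewrite h ltxx.
  subst z.
  have hx : x = -4*g*eta + 2*y*(r-s).
    apply/eqP; rewrite -subr_eq0; apply/eqP.
    have -> : x - (-4*g*eta + 2*y*(r-s)) = -2 * (-x/2 - 2*g*eta + y/2*(r-s) - y/2*(s-r)) by field.
    by rewrite e1 mulr0.
  have hy : y * K = 2*g*(1-eta*P).
    apply/eqP; rewrite -subr_eq0; apply/eqP.
    have -> : y * K - 2*g*(1-eta*P) = - (2*g + x/2*P - y*(r+s) + (y-y)/4*1) by rewrite hx /K; field.
    by rewrite e2 oppr0.
  have hy' : y = 2*g*(1-eta*P)/K by rewrite -hy mulfK.
  by split; [|split]; rewrite ?hx hy'.
- case=> [hy [hz hx]]; subst x y z.
  split; [|split]; rewrite /K; field; exact: hK0.
Qed.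

Lemma deltas (Y : fastvar R) u v : 0 < m -> 0 < u -> 0 < v ->
  Na1 Y = u -> Na2 Y = v -> NA1 Y = v -> NA2 Y = u ->
  ((G_dl g m eta Y = 0 /\ G_dlA g m Y = 0 /\ G_dla g m Y = 0) <->
  (dlA Y = 2*g*(1-eta*((u-v)/(u+v)))/((m*u/v+m*v/u) - (m*u/v-m*v/u)*((u-v)/(u+v)))
   /\ dla Y = 2*g*(1-eta*((u-v)/(u+v)))/((m*u/v+m*v/u) - (m*u/v-m*v/u)*((u-v)/(u+v)))
   /\ dl Y = -4*g*eta + 2*(2*g*(1-eta*((u-v)/(u+v)))/((m*u/v+m*v/u) - (m*u/v-m*v/u)*((u-v)/(u+v))))*(m*u/v-m*v/u)))
  /\ (dlA Y = dla Y -> F m Y = 0).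
Proof.
move=> hm0 hu hv h1 h2 h3 h4.
have huv : u + v != 0 by rewrite gt_eqF // addr_gt0.
have hvu : v + u != 0 by rewrite addrC.
have hu0 : u != 0 by rewrite gt_eqF.
have hv0 : v != 0 by rewrite gt_eqF.
have hp21 : p2 Y - p1 Y = (u-v)/(u+v) by rewrite /p1 /p2 h1 h2 h3 h4; field; by rewrite ?huv ?hvu.
have hp : p1 Y + p2 Y = 1 by rewrite /p1 /p2 h1 h2 h3 h4; field; by rewrite ?huv ?hvu.
have hq12 : q1 Y - q2 Y = (u-v)/(u+v) by rewrite /q1 /q2 -hp21; ring.
have hq : q1 Y + q2 Y = 1 by move: hp; rewrite /q1 /q2; lra.
have hRA : RA m Y = m*u/v by rewrite /RA h3 h4.
have hSA : SA m Y = m*v/u by rewrite /SA h3 h4.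
have hRa : Ra m Y = m*v/u by rewrite /Ra h1 h2.
have hSa : Sa m Y = m*u/v by rewrite /Sa h1 h2.
split.
- rewrite /G_dl /G_dlA /G_dla hRA hSA hRa hSa hq12 hq hp21 hp.
  rewrite [m * v / u + m * u / v]addrC; have L := lin (m*u/v) (m*v/u) ((u-v)/(u+v)) (dl Y) (dlA Y) (dla Y). apply: L.
  + by rewrite mulr_gt0 // ?invr_gt0 // mulr_gt0.
  + by rewrite mulr_gt0 // ?invr_gt0 // mulr_gt0.
  + have -> : 1 - (u - v) / (u + v) = 2 * v / (u + v) by field.
    by rewrite divr_gt0 ?addr_gt0 // mulr_gt0.
  + have -> : 1 + (u - v) / (u + v) = 2 * u / (u + v) by field.
    by rewrite divr_gt0 ?addr_gt0 // mulr_gt0.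
- move=> hee; rewrite /F hRA hSA hRa hSa hp21 hp hee; ring.
Qed.


Definition c := g*(1-eta)^+2.
Definition d := g*(1+eta)^+2.
Definition k := g * (eta ^+ 2 + 1).
Definition Sq := Num.sqrt ((d-c)^+2 + 4 * m^+2).
Definition a := (Sq - c - d)/2.
Definition n := a + 1 - m.

Lemma hdc : 0 < d - c.
Proof. have -> : d - c = 4*g*eta by rewrite /d /c; ring. by rewrite !mulr_gt0. Qed.
Lemma hSq2 : Sq^+2 = (d-c)^+2 + 4 * m^+2.
Proof. rewrite /Sq sqr_sqrtr // addr_ge0 ?sqr_ge0 // mulr_ge0 ?sqr_ge0 //. Qed.
Lemma hSq0 : 0 <= Sq. Proof. exact: sqrtr_ge0. Qed.
Lemma ha : (a+c)*(a+d) = m^+2.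
Proof.
have -> : (a+c)*(a+d) = (Sq^+2 - (d-c)^+2)/4 by rewrite /a; field.
rewrite hSq2; field; by [].
Qed.
Lemma hac : 0 < a + c.
Proof.
have h1 := hdc; have h2 := hSq2; have h3 := hSq0.
have -> : a + c = (Sq - (d-c))/2 by rewrite /a; field.
apply: divr_gt0 => //.
have hp : 0 < Sq + (d - c) by lra.
rewrite -(pmulr_lgt0 _ hp).
have -> : (Sq - (d - c)) * (Sq + (d - c)) = Sq^+2 - (d-c)^+2 by ring.
rewrite h2 addrAC subrr add0r.
by rewrite mulr_gt0 // exprn_gt0.
Qed.
Lemma ham : a + c < m.
Proof.
have h1 := hdc; have h2 := ha; have h3 := hac.
rewrite ltNge; apply/negP => h.
have hp1 : 0 <= (a+c-m)*(a+d) by apply: mulr_ge0 => //; lra.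
have hp2 : 0 < m*(a+d-m) by apply: mulr_gt0 => //; lra.
have e : (a+c)*(a+d) - m^+2 = (a+c-m)*(a+d) + m*(a+d-m) by ring.
lra.
Qed.
Lemma hma : m < a + d.
Proof.
have h1 := hdc; have h2 := ha; have h3 := hac.
rewrite ltNge; apply/negP => h.
have hp1 : 0 <= m*(m-(a+d)) by apply: mulr_ge0 => //; lra.
have hp2 : 0 < (a+d)*(m-(a+c)) by apply: mulr_gt0 => //; lra.
have e : m^+2 - (a+c)*(a+d) = m*(m-(a+d)) + (a+d)*(m-(a+c)) by ring.
lra.
Qed.

Lemma npos : (m - 1 + c <= 0 \/ (m-1+c)*(m-1+d) < m^+2) -> 0 < n.
Proof.
have h1 := hdc; have h2 := ha; have h3 := hac.
rewrite /n; case=> h.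
- lra.
- rewrite ltNge; apply/negP => hn.
  have : (a+c)*(a+d) <= (m-1+c)*(m-1+d) by nra.
  lra.
Qed.

Lemma cond : (k < 1 \/ m < 2 * g ^+ 2 * eta ^+ 2 / (k - 1) - k + 1) ->
  (m - 1 + c <= 0 \/ (m-1+c)*(m-1+d) < m^+2).
Proof.
have hck : c = k - 2*g*eta by rewrite /c /k; ring.
have hdk : d = k + 2*g*eta by rewrite /d /k; ring.
have hge : 0 < g * eta by rewrite mulr_gt0.
have case1 : k < 1 -> (m - 1 + c <= 0 \/ (m-1+c)*(m-1+d) < m^+2).
  move=> hk.
  case: (lerP (m - 1 + c) 0) => hmc; [by left | right].
  have -> : (m-1+c)*(m-1+d) = m^+2 - (m-(1-c))*(2-c-d) - (1-c)^+2 by ring.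
  have hp1 : 0 < (m-(1-c))*(2-c-d) by apply: mulr_gt0 => //; lra.
  have hp2 : 0 < (1-c)^+2 by rewrite exprn_gt0 //; lra.
  lra.
case=> [hk|]; first exact: case1.
case: (ltgtP k 1) => hk; first by move=> _; exact: case1.
- move=> hmx; right.
  have hk1 : 0 < k - 1 by lra.
  have hx : (m + k - 1) * (k - 1) < 2 * g ^+ 2 * eta ^+ 2.
    by rewrite -ltr_pdivlMr //; lra.
  have -> : (m-1+c)*(m-1+d) = m^+2 + 2 * ((m + k - 1) * (k - 1)) - (k-1)^+2 - 4*g^+2*eta^+2
    by rewrite hck hdk; ring.
  have hp2 : 0 <= (k-1)^+2 by apply: sqr_ge0.
  lra.
- rewrite hk (subrr 1) invr0 mulr0 sub0r addNr => hmx; lra.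
Qed.


Definition t := n/(d-c).
Definition us := t*(a+d-m).
Definition vs := t*(m-a-c).

Lemma hdc0 : d - c != 0. Proof. by rewrite gt_eqF // hdc. Qed.

Lemma huv : us + vs = n.
Proof. rewrite /us /vs /t; field. exact: hdc0. Qed.

Lemma us_pos : 0 < n -> 0 < us.
Proof. move=> hn; have h1 := hdc; have h2 := hma. rewrite /us /t; apply: mulr_gt0; [apply: divr_gt0 => // | lra]. Qed.
Lemma vs_pos : 0 < n -> 0 < vs.
Proof. move=> hn; have h1 := hdc; have h2 := ham. rewrite /vs /t; apply: mulr_gt0; [apply: divr_gt0 => // | lra]. Qed.

Lemma GNa1 Y : G_Na1 g m eta Y 0 = Na1 Y * (1 - (NA1 Y + Na1 Y) - c - m) + m * Na2 Y.
Proof. rewrite /G_Na1 /c; ring. Qed.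
Lemma GNa2 Y : G_Na2 g m eta Y 0 = Na2 Y * (1 - (NA2 Y + Na2 Y) - d - m) + m * Na1 Y.
Proof. rewrite /G_Na2 /d; ring. Qed.
Lemma GNA1 Y : G_NA1 g m eta Y 0 = NA1 Y * (1 - (NA1 Y + Na1 Y) - d - m) + m * NA2 Y.
Proof. rewrite /G_NA1 /d; ring. Qed.
Lemma GNA2 Y : G_NA2 g m eta Y 0 = NA2 Y * (1 - (NA2 Y + Na2 Y) - c - m) + m * NA1 Y.
Proof. rewrite /G_NA2 /c; ring. Qed.

Lemma exN (Y : fastvar R) : Na1 Y = us -> Na2 Y = vs -> NA1 Y = vs -> NA2 Y = us ->
  [/\ G_Na1 g m eta Y 0 = 0, G_Na2 g m eta Y 0 = 0, G_NA1 g m eta Y 0 = 0 & G_NA2 g m eta Y 0 = 0].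
Proof.
move=> h1 h2 h3 h4.
have e : vs + us = n by rewrite addrC huv.
have hA := ha.
have E1 : us * (1 - (vs + us) - c - m) + m * vs = 0.
  rewrite e; have -> : us * (1 - n - c - m) + m * vs = t * (m^+2 - (a+c)*(a+d)) by rewrite /us /vs /n; ring.
  by rewrite hA subrr mulr0.
have E2 : vs * (1 - (vs + us) - d - m) + m * us = 0.
  rewrite e; have -> : vs * (1 - n - d - m) + m * us = t * ((a+c)*(a+d) - m^+2) by rewrite /us /vs /n; ring.
  by rewrite hA subrr mulr0.
split; rewrite ?GNa1 ?GNa2 ?GNA1 ?GNA2 ?h1 ?h2 ?h3 ?h4 //.
- by rewrite [us + vs]addrC.
- by rewrite [us + vs]addrC.
Qed.

Lemma uniqN (Y : fastvar R) : admissible Y ->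
  [/\ G_Na1 g m eta Y 0 = 0, G_Na2 g m eta Y 0 = 0, G_NA1 g m eta Y 0 = 0 & G_NA2 g m eta Y 0 = 0] ->
  [/\ Na1 Y = us, Na2 Y = vs, NA1 Y = vs & NA2 Y = us].
Proof.
case=> p1 p2 p3 p4 [].
rewrite GNa1 GNa2 GNA1 GNA2.
case: Y p1 p2 p3 p4 => x1 x2 X1 X2 dl0 dA da /= p1 p2 p3 p4 E1 E2 E3 E4.
have e1 : (X1 + x1 + c + m - 1) * x1 = m * x2.
  apply/eqP; rewrite -subr_eq0; apply/eqP; rewrite -[RHS](oppr0) -E1; ring.
have e2 : (X2 + x2 + d + m - 1) * x2 = m * x1.
  apply/eqP; rewrite -subr_eq0; apply/eqP; rewrite -[RHS](oppr0) -E2; ring.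
have e3 : (X1 + x1 + d + m - 1) * X1 = m * X2.
  apply/eqP; rewrite -subr_eq0; apply/eqP; rewrite -[RHS](oppr0) -E3; ring.
have e4 : (X2 + x2 + c + m - 1) * X2 = m * X1.
  apply/eqP; rewrite -subr_eq0; apply/eqP; rewrite -[RHS](oppr0) -E4; ring.
have hx0 : x1 * x2 != 0 by rewrite gt_eqF // mulr_gt0.
have hX0 : X1 * X2 != 0 by rewrite gt_eqF // mulr_gt0.
have pe : (X1 + x1 + c + m - 1) * (X2 + x2 + d + m - 1) = m^+2.
  apply: (mulIf hx0).
  have -> : (X1 + x1 + c + m - 1) * (X2 + x2 + d + m - 1) * (x1 * x2)
    = ((X1 + x1 + c + m - 1) * x1) * ((X2 + x2 + d + m - 1) * x2) by ring.
  rewrite e1 e2; ring.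
have pf : (X1 + x1 + d + m - 1) * (X2 + x2 + c + m - 1) = m^+2.
  apply: (mulIf hX0).
  have -> : (X1 + x1 + d + m - 1) * (X2 + x2 + c + m - 1) * (X1 * X2)
    = ((X1 + x1 + d + m - 1) * X1) * ((X2 + x2 + c + m - 1) * X2) by ring.
  rewrite e3 e4; ring.
have hn12 : X2 + x2 = X1 + x1.
  have h : (d - c) * ((X1 + x1) - (X2 + x2)) = 0.
    have -> : (d - c) * ((X1 + x1) - (X2 + x2)) =
      (X1 + x1 + c + m - 1) * (X2 + x2 + d + m - 1) - (X1 + x1 + d + m - 1) * (X2 + x2 + c + m - 1) by ring.
    by rewrite pe pf subrr.
  move/eqP: h; rewrite mulf_eq0 (negbTE hdc0) /= subr_eq0 => /eqP ->. done.
set A := X1 + x1 + m - 1.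
have hAc : 0 < A + c.
  have hp : 0 < x1 := p1.
  rewrite -(pmulr_lgt0 _ hp).
  have -> : (A + c) * x1 = m * x2 by rewrite -e1 /A; ring.
  by rewrite mulr_gt0.
have hAd : 0 < A + d by have := hdc; lra.
have hA2 : (A + c) * (A + d) = m^+2 by rewrite -pe hn12 /A; ring.
have hAa : A = a.
  have hsq : (2*A + c + d)^+2 = (d-c)^+2 + 4 * m^+2.
    rewrite -hA2; ring.
  have : Sq = 2*A + c + d.
    rewrite /Sq -hsq sqrtr_sqr ger0_norm //; lra.
  by rewrite /a => ->; field.
have hn1 : X1 + x1 = n by rewrite /n -hAa /A; ring.
have hX1 : X1 = vs.
  apply: (mulIf hdc0).
  have -> : vs * (d - c) = n * (m - a - c) by rewrite /vs /t; field; exact: hdc0.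
  have hlin : (a + c) * x1 + (a + d) * X1 = m * n.
    rewrite -hAa.
    have -> : (A + c) * x1 = m * x2 by rewrite -e1 /A; ring.
    have -> : (A + d) * X1 = m * X2 by rewrite -e3 /A; ring.
    rewrite -hn1 -hn12; ring.
  have hx1 : x1 = n - X1 by rewrite -hn1; ring.
  rewrite hx1 in hlin.
  have := hlin; move=> hl.
  apply/eqP; rewrite -subr_eq0; apply/eqP.
  have -> : X1 * (d - c) - n * (m - a - c) = (a + c) * (n - X1) + (a + d) * X1 - m * n by ring.
  by rewrite hl subrr.
have hx1 : x1 = us.
  have := huv; rewrite -hn1 hX1 => h.
  lra.
have hm0 : m != 0 by rewrite gt_eqF.
have hA := ha.
have hx2 : x2 = vs.
  apply: (mulfI hm0); rewrite -e1.
  have -> : X1 + x1 + c + m - 1 = a + c by rewrite -hAa /A; ring.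
  rewrite hx1 /us /vs; apply/eqP; rewrite -subr_eq0; apply/eqP.
  have -> : (a + c) * (t * (a + d - m)) - m * (t * (m - a - c)) = t * ((a+c)*(a+d) - m^+2) by ring.
  by rewrite hA subrr mulr0.
have hX2 : X2 = us.
  apply: (mulfI hm0); rewrite -e3.
  have -> : X1 + x1 + d + m - 1 = a + d by rewrite -hAa /A; ring.
  rewrite hX1 /us /vs; apply/eqP; rewrite -subr_eq0; apply/eqP.
  have -> : (a + d) * (t * (m - a - c)) - m * (t * (a + d - m)) = t * (m^+2 - (a+c)*(a+d)) by ring.
  by rewrite hA subrr mulr0.
by split.
Qed.


Lemma main_sec : (g * (eta ^+ 2 + 1) < 1 \/
   m < 2 * g ^+ 2 * eta ^+ 2 / (g * (eta ^+ 2 + 1) - 1) - g * (eta ^+ 2 + 1) + 1) ->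
  exists Ystar : fastvar R,
    [/\ admissible Ystar /\ G_zero g m eta Ystar 0,
        (forall Y : fastvar R, admissible Y -> G_zero g m eta Y 0 -> Y = Ystar),
        F m Ystar = 0,
        stationary g m eta Ystar 0 &
        [/\ Na1 Ystar = NA2 Ystar, Na2 Ystar = NA1 Ystar & dlA Ystar = dla Ystar]].
Proof.
move=> hyp.
have hn : 0 < n := npos (cond hyp).
have hu := us_pos hn; have hv := vs_pos hn.
set D := 2*g*(1-eta*((us-vs)/(us+vs)))/((m*us/vs+m*vs/us) - (m*us/vs-m*vs/us)*((us-vs)/(us+vs))).
set dl0 := -4*g*eta + 2*D*(m*us/vs-m*vs/us).
pose Ys := FastVar us vs vs us dl0 D D.
have hdY := @deltas Ys us vs hm hu hv erefl erefl erefl erefl.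
have hadm : admissible Ys by split.
have hG : G_zero g m eta Ys 0.
  split; first exact: exN.
  have [h1 [h2 h3]] := (hdY.1).2 (conj erefl (conj erefl erefl)).
  by split.
have hF : F m Ys = 0 by apply: hdY.2.
exists Ys; split => //.
- move=> Y hY [hN hd].
  have [e1 e2 e3 e4] := @uniqN Y hY hN.
  have hdY' := @deltas Y us vs hm hu hv e1 e2 e3 e4.
  have [f1 [f2 f3]] := (hdY'.1).1 (let: And3 a b c := hd in conj a (conj b c)).
  by case: Y e1 e2 e3 e4 f1 f2 f3 {hY hN hd hdY'} => /= ? ? ? ? ? ? ? -> -> -> -> -> -> ->.
- by split => //; rewrite hF mulr0 ?oppr0 add0r.
Qed.
End Main.

Theorem mainTheorem8 (R : realType) (g m eta : R) :
  0 < g -> 0 < m -> 0 < eta ->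
  (g * (eta ^+ 2 + 1) < 1 \/
   m < 2 * g ^+ 2 * eta ^+ 2 / (g * (eta ^+ 2 + 1) - 1) - g * (eta ^+ 2 + 1) + 1) ->
  exists Ystar : fastvar R,
    [/\ admissible Ystar /\ G_zero g m eta Ystar 0,
        (forall Y : fastvar R, admissible Y -> G_zero g m eta Y 0 -> Y = Ystar),
        F m Ystar = 0,
        stationary g m eta Ystar 0 &
        [/\ Na1 Ystar = NA2 Ystar, Na2 Ystar = NA1 Ystar & dlA Ystar = dla Ystar]].
Proof. move=> hg hm he; exact: main_sec. Qed.
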